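(* Let $(\mathcal V,\mathcal W,\lambda)$ be a FTvN system where $\mathcal V$ is finite dimensional with $\dim(\mathcal V)\ge 2$, and suppose that for $x,y\in\mathcal V$, $0=\langle x,y\rangle=\langle\lambda(x),\lambda(y)\rangle$ implies $x=0$ or $y=0$. Then $\{0\}$ and $\mathcal V$ are the only spectral cones in $\mathcal V$. Consequently, for any nonzero $u\in\mathcal V$, the convex cone generated by $[u]$ equals $\mathcal V$.
   Context: A Fan-Theobald-von Neumann (FTvN) system is a triple $(\mathcal V,\mathcal W,\lambda)$ where $\mathcal V,\mathcal W$ are real inner product spaces and $\lambda:\mathcal V\to\mathcal W$ is a map such that: (A1) $\|\lambda(x)\|=\|x\|$ for all $x$; (A2) $\langle x,y\rangle\le\langle\lambda(x),\lambda(y)\rangle$ for all $x,y$; (A3) for every $c\in\mathcal V$ and $q\in\lambda(\mathcal V)$ there exists $x$ with $\lambda(x)=q$ and $\langle c,x\rangle=\langle\lambda(c),\lambda(x)\rangle$. The $\lambda$-orbit of $u$ is $[u]=\{x:\lambda(x)=\lambda(u)\}$; a set $E$ is spectral if $x\in E\Rightarrow[x]\subseteq E$. A spectral cone is a (nonempty) spectral set that is also a convex cone. *)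

(* Defs.v *)
From mathcomp Require Import all_boot all_order all_algebra.
From mathcomp Require Import reals.
Set Implicit Arguments. Unset Strict Implicit. Unset Printing Implicit Defensive.
Import Order.TTheory GRing.Theory Num.Theory.
Local Open Scope ring_scope.

Definition is_inner_product (R : realType) (V : lmodType R)
    (ip : V -> V -> R) : Prop :=
  [/\ (forall x y, ip x y = ip y x),
      (forall a x y z, ip (a *: x + y) z = a * ip x z + ip y z)
    & (forall x, x != 0 -> 0 < ip x x)].

Definition ipnorm (R : realType) (V : lmodType R) (ip : V -> V -> R) (x : V) : R :=
  Num.sqrt (ip x x).

Definition FTvN_system (R : realType) (V W : lmodType R)
    (ipV : V -> V -> R) (ipW : W -> W -> R) (lam : V -> W) : Prop :=
  [/\ is_inner_product ipV, is_inner_product ipW,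
      (forall x, ipnorm ipW (lam x) = ipnorm ipV x),
      (forall x y, ipV x y <= ipW (lam x) (lam y))
    & (forall (c : V) (u : V), exists x : V,
          lam x = lam u /\ ipV c x = ipW (lam c) (lam x))].

Definition lam_orbit (R : realType) (V W : lmodType R) (lam : V -> W) (u : V) : V -> Prop :=
  fun x => lam x = lam u.

Definition spectral (R : realType) (V W : lmodType R) (lam : V -> W) (E : V -> Prop) : Prop :=
  forall x, E x -> forall y, lam_orbit lam x y -> E y.

Definition convex_cone (R : realType) (V : lmodType R) (K : V -> Prop) : Prop :=
  [/\ exists x, K x,
      (forall x y, K x -> K y -> K (x + y))
    & (forall (a : R) x, 0 <= a -> K x -> K (a *: x))].

Definition spectral_cone (R : realType) (V W : lmodType R) (lam : V -> W)
    (K : V -> Prop) : Prop :=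
  spectral lam K /\ convex_cone K.

Definition cone_hull (R : realType) (V : lmodType R) (S : V -> Prop) : V -> Prop :=
  fun x => exists (n : nat) (a : 'I_n -> R) (v : 'I_n -> V),
    [/\ (forall i, 0 <= a i), (forall i, S (v i)) & x = \sum_(i < n) a i *: v i].

(* Main.v *)
Require Import Defs.
From mathcomp Require Import all_boot all_order all_algebra.
From mathcomp Require Import reals classical_sets.
From Stdlib Require Import Classical.
From mathcomp Require Import ring lra.
Import Order.TTheory GRing.Theory Num.Theory.
Set Implicit Arguments. Unset Strict Implicit. Unset Printing Implicit Defensive.
Local Open Scope ring_scope.
Local Open Scope classical_set_scope.

Section IP.
Variables (R : realType) (V : lmodType R) (ip : V -> V -> R).
Hypothesis Hip : is_inner_product ip.

Lemma ipC x y : ip x y = ip y x.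
Proof. by case: Hip. Qed.
Lemma ip0l z : ip 0 z = 0.
Proof.
case: Hip => _ H _; have := H 1 0 0 z; rewrite scale1r addr0 mul1r.
lra.
Qed.
Lemma ipDl x y z : ip (x + y) z = ip x z + ip y z.
Proof. by case: Hip => _ H _; have := H 1 x y z; rewrite scale1r mul1r. Qed.
Lemma ipZl a x z : ip (a *: x) z = a * ip x z.
Proof. by case: Hip => _ H _; rewrite -[a *: x]addr0 H ip0l addr0. Qed.
Lemma ipNl x z : ip (- x) z = - ip x z.
Proof. by rewrite -scaleN1r ipZl mulN1r. Qed.
Lemma ipBl x y z : ip (x - y) z = ip x z - ip y z.
Proof. by rewrite ipDl ipNl. Qed.
Lemma ip0r z : ip z 0 = 0.
Proof. by rewrite ipC ip0l. Qed.
Lemma ipDr x y z : ip z (x + y) = ip z x + ip z y.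
Proof. by rewrite ipC ipDl ![ip _ z]ipC. Qed.
Lemma ipZr a x z : ip z (a *: x) = a * ip z x.
Proof. by rewrite ipC ipZl ipC. Qed.
Lemma ipNr x z : ip z (- x) = - ip z x.
Proof. by rewrite ipC ipNl ipC. Qed.
Lemma ipBr x y z : ip z (x - y) = ip z x - ip z y.
Proof. by rewrite ipDr ipNr. Qed.
Lemma ip_gt0 x : x != 0 -> 0 < ip x x.
Proof. by case: Hip => _ _ H; apply: H. Qed.
Lemma ip_eq0 x : ip x x = 0 -> x = 0.
Proof.
move=> h; apply/eqP; apply: contraTT isT => /ip_gt0; by rewrite h ltxx.
Qed.
End IP.

Lemma ivt_lip (R : realType) (h : R -> R) (K : R) :
  0 <= K -> h 0 < 0 -> 0 < h 1 -> (forall t, 0 <= t -> t <= 1 -> h t != 0) ->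
  (forall s t, s <= t -> h t <= h s + (t - s) * K /\ h s <= h t + (t - s) * K) ->
  False.
Proof.
move=> K0 h0 h1 hn hl.
pose A := [set t : R | 0 <= t /\ t <= 1 /\ h t < 0].
have A0 : A 0 by rewrite /A /=; split => //; split => //; lra.
have hsA : has_sup A by split; [exists 0 | exists 1 => t [_ []]].
have ubA := sup_upper_bound hsA.
set s := sup A in ubA.
have s0 : 0 <= s by apply: ubA.
have s1 : s <= 1 by apply: ge_sup; [exists 0 | move=> t [_ []]].
have K1 : 0 < K + 1 by lra.
have := hn s s0 s1; rewrite neq_lt => /orP [hs|hs].
- have s1' : s < 1 by rewrite lt_neqAle s1 andbT; apply/eqP => e; move: hs; rewrite e; lra.
  pose d := Num.min (1 - s) (- h s / (K + 1)).
  have d0 : 0 < d by rewrite lt_min; apply/andP; split; [lra| apply: divr_gt0; lra].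
  have d1 : d <= 1 - s by rewrite ge_min lexx.
  have d2 : d * (K + 1) <= - h s.
    by rewrite -ler_pdivlMr // ge_min lexx orbT.
  have [hh _] := hl s (s + d) ltac:(lra).
  have : A (s + d).
    split; first lra; split; first lra.
    have e : s + d - s = d by lra.
    rewrite e in hh.
    have : d * K < d * (K + 1) by rewrite ltr_pM2l //; lra.
    lra.
  move/ubA; lra.
- have s0' : 0 < s by rewrite lt_neqAle s0 andbT; apply/eqP => e; move: hs; rewrite -e; lra.
  pose d := Num.min s (h s / (K + 1)).
  have d0 : 0 < d by rewrite lt_min; apply/andP; split; [lra| apply: divr_gt0; lra].
  have d2 : d * (K + 1) <= h s.
    by rewrite -ler_pdivlMr // ge_min lexx orbT.
  have [t At lt] := sup_adherent d0 hsA.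
  have ts : t <= s by apply: ubA.
  have [hh _] := hl t s ts.
  rewrite -/s in lt.
  case: At => _ [_ ht].
  have : (s - t) * K <= d * K.
    apply: ler_wpM2r => //; lra.
  have : d * K < d * (K + 1) by rewrite ltr_pM2l //; lra.
  lra.
Qed.

Lemma twoD (R : realType) (P : R -> R -> Prop) :
  (forall a b a' b', P a b -> P a' b' -> P (a + a') (b + b')) ->
  (forall k a b, 0 <= k -> P a b -> P (k * a) (k * b)) ->
  (forall al be, (al != 0) || (be != 0) -> exists a b, P a b /\ 0 < al * a + be * b) ->
  exists a b, P a b /\ 0 < a /\ 0 < b.
Proof.
move=> PD PZ H; apply: NNPP => hQ.
have nQ : forall a b, P a b -> 0 < a -> b <= 0.
  move=> a b Pab a0; rewrite leNgt; apply/negP => b0; apply: hQ; by exists a, b.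
have [a1 [b1 [P1 h1]]] := H 1 0 ltac:(by rewrite oner_neq0).
have {}h1 : 0 < a1 by lra.
pose A := [set r : R | exists a b, [/\ P a b, 0 < a & r = b / a]].
have hsA : has_sup A.
  split; first by exists (b1 / a1), a1, b1.
  exists 0 => r [a [b [Pab a0 ->]]]; rewrite pmulr_lle0 ?invr_gt0 //; exact: nQ Pab a0.
have ubA := sup_upper_bound hsA.
set s := sup A in ubA.
have [aq [bq [Pq hq]]] := H (- s) 1 ltac:(by rewrite oner_neq0 orbT).
case: (ltP 0 aq) => aq0.
  have : A (bq / aq) by exists aq, bq.
  move/ubA; rewrite ler_pdivrMr // => ?; nra.
set M := - aq.
have M0 : 0 <= M by rewrite /M; lra.
pose del := - s * aq + 1 * bq.
have del0 : 0 < del by exact: hq.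
pose eps := del / (2 * (M + 1)).
have eps0 : 0 < eps.
  apply: divr_gt0; lra.
have [r [ap [bp [Pp ap0 ->]]] lt] := sup_adherent eps0 hsA.
pose t := ap / (M + 1).
have t0 : 0 <= t by apply: divr_ge0; lra.
have Ppt := PD _ _ _ _ Pp (PZ _ _ _ t0 Pq).
have tM : t * (M + 1) = ap by rewrite /t mulfVK //; lra.
have ea : eps * (2 * (M + 1)) = del by rewrite /eps mulfVK //; lra.
have apt : ap + t * aq = t by rewrite -tM /M; ring.
have tp : 0 < t by apply: divr_gt0; lra.
have apos : 0 < ap + t * aq by rewrite apt.
have : A ((bp + t * bq) / (ap + t * aq)) by exists (ap + t * aq), (bp + t * bq).
move/ubA; rewrite ler_pdivrMr // => hle.
have : s - eps < bp / ap by [].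
rewrite ltr_pdivlMr // => hlt.
(* (bp - s ap) + t del <= 0 ; bp - s ap > - eps ap ; t del = 2 eps ap *)
have e1 : t * del = 2 * eps * ap.
  rewrite -tM -ea; ring.
rewrite /del in e1; nra.
Qed.

Section Cone.
Variables (R : realType) (V : vectType R) (ip : V -> V -> R).
Hypothesis Hip : is_inner_product ip.

Definition orth (X : seq V) x := forall w, w \in X -> ip x w = 0.
Definition isCone (C : V -> Prop) :=
  [/\ C 0, (forall x y, C x -> C y -> C (x + y)) &
      (forall a x, 0 <= a -> C x -> C (a *: x))].

Lemma span_orth X y : orth X y -> forall v, v \in <<X>>%VS -> ip y v = 0.
Proof.
elim: X => [|w X IH] hy v.
  by rewrite span_nil memv0 => /eqP ->; rewrite (ip0r Hip).
rewrite span_cons => /memv_addP [a /vlineP [k ->] [b hb ->]].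
rewrite (ipDr Hip) (ipZr Hip) hy ?mem_head // mulr0 add0r.
apply: IH => // w' hw'; apply: hy; by rewrite in_cons hw' orbT.
Qed.

Lemma orth_span0 X v : orth X v -> v \in <<X>>%VS -> v = 0.
Proof. by move=> h hv; apply: (ip_eq0 Hip); exact: (span_orth h hv). Qed.

Lemma orthZ X a v : orth X v -> orth X (a *: v).
Proof. by move=> h w hw; rewrite (ipZl Hip) h // mulr0. Qed.

Lemma dim_cons X v : orth X v -> v != 0 ->
  \dim <<v :: X>>%VS = (\dim <<X>>%VS).+1.
Proof.
move=> hX nz; rewrite span_cons dimv_disjoint_sum ?dim_vline ?nz //.
apply/eqP; rewrite -subv0; apply/subvP => w /memv_capP [/vlineP [k ->] hw].
by rewrite memv0; apply/eqP; apply: (orth_span0 (orthZ k hX)).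
Qed.

Lemma Lind m : forall X, (\dim <<X>>%VS + m = \dim (fullv : {vspace V}))%N ->
  forall C, isCone C -> (forall x, C x -> orth X x) ->
  (forall c, orth X c -> c != 0 -> exists x, C x /\ 0 < ip x c) ->
  forall v, orth X v -> C v.
Proof.
elim: m => [|m IH] X hd C [C0 CD CZ] CX HS v hv.
  have eX : <<X>>%VS = fullv.
    by apply/eqP; rewrite eqEdim subvf -hd addn0 leqnn.
  by rewrite (orth_span0 hv) // eX memvf.
have [->|nz] := eqVneq v 0; first by [].
have vv0 : 0 < ip v v by apply: ip_gt0.
pose p x := x - (ip x v / ip v v) *: v.
have pip x w : ip (p x) w = ip x w - (ip x v / ip v v) * ip v w.
  by rewrite /p (ipBl Hip) (ipZl Hip).
have pv x : ip (p x) v = 0.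
  by rewrite pip mulfVK ?subrr // gt_eqF.
have pD x y : p (x + y) = p x + p y.
  by rewrite /p (ipDl Hip) mulrDl scalerDl opprD addrACA.
have pZ a x : p (a *: x) = a *: p x.
  by rewrite /p (ipZl Hip) scalerBr scalerA mulrA.
pose D y := y = 0 \/ exists x, [/\ C x, 0 < ip x v & y = p x].
have Dcone : isCone D.
  split; first by left.
  - move=> x y [->|[x1 [Cx1 px1 ->]]] [->|[y1 [Cy1 py1 ->]]].
    + by left; rewrite addr0.
    + by right; exists y1; rewrite add0r.
    + by right; exists x1; rewrite addr0.
    + right; exists (x1 + y1); split; [exact: CD | | by rewrite pD].
      by rewrite (ipDl Hip) addr_gt0.
  - move=> a y a0 [->|[x [Cx px ->]]]; first by left; rewrite scaler0.
    have [->|an0] := eqVneq a 0; first by left; rewrite scale0r.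
    have ap : 0 < a by rewrite lt_neqAle eq_sym an0 a0.
    right; exists (a *: x); split; [exact: CZ | | by rewrite pZ].
    by rewrite (ipZl Hip) mulr_gt0.
have orthp x : C x -> orth (v :: X) (p x).
  move=> Cx w; rewrite in_cons => /orP [/eqP ->|hw]; first exact: pv.
  by rewrite pip (CX x Cx) // (hv w hw) mulr0 subrr.
have DX y : D y -> orth (v :: X) y.
  case=> [->|[x [Cx _ ->]]]; last exact: orthp.
  by move=> w _; rewrite (ip0l Hip).
have HD c : orth (v :: X) c -> c != 0 -> exists x, D x /\ 0 < ip x c.
  move=> hc cnz.
  have cv : ip c v = 0 by apply: hc; rewrite mem_head.
  have cX : orth X c by move=> w hw; apply: hc; rewrite in_cons hw orbT.
  have cc0 : 0 < ip c c by apply: ip_gt0.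
  pose P a b := exists x, [/\ C x, a = ip x c & b = ip x v].
  have [a [b [[x [Cx -> ->]] [xa xb]]]] : exists a b, P a b /\ 0 < a /\ 0 < b.
    apply: twoD.
    - move=> a b a' b' [x [Cx -> ->]] [y [Cy -> ->]].
      by exists (x + y); rewrite !(ipDl Hip); split => //; apply: CD.
    - move=> k a b k0 [x [Cx -> ->]].
      by exists (k *: x); rewrite !(ipZl Hip); split => //; apply: CZ.
    - move=> al be hab.
      pose z := al *: c + be *: v.
      have zX : orth X z.
        by move=> w hw; rewrite /z (ipDl Hip) !(ipZl Hip) cX // hv // !mulr0 addr0.
      have znz : z != 0.
        apply/eqP => z0; move: hab.
        have e1 : ip z c = al * ip c c.
          by rewrite /z (ipDl Hip) !(ipZl Hip) (ipC Hip v c) cv mulr0 addr0.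
        have e2 : ip z v = be * ip v v.
          by rewrite /z (ipDl Hip) !(ipZl Hip) cv mulr0 add0r.
        rewrite z0 (ip0l Hip) in e1; rewrite z0 (ip0l Hip) in e2.
        move/esym/eqP: e1; rewrite mulf_eq0 (gt_eqF cc0) orbF => /eqP ->.
        move/esym/eqP: e2; rewrite mulf_eq0 (gt_eqF vv0) orbF => /eqP ->.
        by rewrite eqxx.
      have [x [Cx hx]] := HS z zX znz.
      exists (ip x c), (ip x v); split; first by exists x.
      by move: hx; rewrite /z (ipDr Hip) !(ipZr Hip).
  exists (p x); split; first by right; exists x.
  by rewrite pip (ipC Hip v c) cv mulr0 subr0.
have hd' : (\dim <<v :: X>>%VS + m = \dim (fullv : {vspace V}))%N.
  by rewrite dim_cons // addSnnS.
have IH' := IH (v :: X) hd' D Dcone DX HD.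
have [z [Cz zv]] := HS v hv nz.
have Dz : D (- p z).
  apply: IH' => w hw; rewrite (ipNl Hip); by rewrite (orthp z Cz) ?oppr0.
have [w [Cw wv pw]] : exists w, [/\ C w, 0 < ip w v & p w = 0].
  case: Dz => [/eqP|[x [Cx xv e]]].
    by rewrite oppr_eq0 => /eqP pz; exists z.
  exists (x + z); split; [exact: CD | by rewrite (ipDl Hip) addr_gt0 |].
  by rewrite pD -e addNr.
have k0 : 0 < ip w v / ip v v by apply: divr_gt0.
move/eqP: pw; rewrite subr_eq0 => /eqP ew.
have -> : v = (ip w v / ip v v)^-1 *: w.
  by rewrite {2}ew scalerA mulVf ?scale1r // gt_eqF.
by apply: CZ => //; rewrite invr_ge0 ltW.
Qed.
End Cone.

Lemma cone_hull_cone (R : realType) (V : vectType R) (S : V -> Prop) (u : V) :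
  S u -> isCone (cone_hull S).
Proof.
move=> Su; split.
- by exists 0%N, (fun _ => 0), (fun _ => u); split => //; rewrite big_ord0.
- move=> x y [n1 [a1 [v1 [a1p S1 ->]]]] [n2 [a2 [v2 [a2p S2 ->]]]].
  exists (n1 + n2)%N.
  exists (fun i => match split i with inl j => a1 j | inr j => a2 j end).
  exists (fun i => match split i with inl j => v1 j | inr j => v2 j end).
  split.
  + by move=> i; case: (split i).
  + by move=> i; case: (split i).
  + rewrite big_split_ord /=; congr (_ + _); apply: eq_bigr => i _.
    * by rewrite (unsplitK (inl _ i)).
    * by rewrite (unsplitK (inr _ i)).
- move=> k x k0 [n [a [v [ap Sv ->]]]].
  exists n, (fun i => k * a i), v; split => //.
  + by move=> i; apply: mulr_ge0.
  + by rewrite scaler_sumr; apply: eq_bigr => i _; rewrite scalerA.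
Qed.

Section FT.
Variables (R : realType) (V : vectType R) (W : lmodType R).
Variables (ipV : V -> V -> R) (ipW : W -> W -> R) (lam : V -> W).
Hypothesis HF : FTvN_system ipV ipW lam.
Hypothesis Hdim : (2 <= \dim (fullv : {vspace V}))%N.
Hypothesis Hz : forall x y : V, ipV x y = 0 -> ipW (lam x) (lam y) = 0 -> x = 0 \/ y = 0.
Variable u : V.
Hypothesis unz : u != 0.

Let HV : is_inner_product ipV. Proof. by case: HF. Qed.
Let HW : is_inner_product ipW. Proof. by case: HF. Qed.
Let A1 : forall x, ipnorm ipW (lam x) = ipnorm ipV x. Proof. by case: HF. Qed.
Let A2 : forall x y, ipV x y <= ipW (lam x) (lam y). Proof. by case: HF. Qed.
Let A3 : forall (c : V) (u : V), exists x : V,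
          lam x = lam u /\ ipV c x = ipW (lam c) (lam x). Proof. by case: HF. Qed.

Let g c := ipW (lam c) (lam u).

Let attain c : exists x, lam x = lam u /\ ipV c x = g c.
Proof. by have [x [e h]] := A3 c u; exists x; rewrite /g -e. Qed.

Let bound c x : lam x = lam u -> ipV c x <= g c.
Proof. by move=> e; rewrite /g -e. Qed.

Let gD a b : g (a + b) <= g a + g b.
Proof.
have [x [e h]] := attain (a + b); rewrite -h (ipDl HV).
by apply: lerD; apply: bound.
Qed.

Let gZ t c : 0 <= t -> g (t *: c) = t * g c.
Proof.
move=> t0; apply/eqP; rewrite eq_le; apply/andP; split.
  have [x [e h]] := attain (t *: c); rewrite -h (ipZl HV).
  by apply: ler_wpM2l => //; apply: bound.
have [x [e h]] := attain c; rewrite -h -(ipZl HV); exact: bound.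
Qed.

Let g0 : g 0 = 0.
Proof. by rewrite -(scale0r u) gZ // mul0r. Qed.

Let gneq0 c : c != 0 -> g c != 0.
Proof.
move=> cnz; apply/eqP => gc0.
have [x [e h]] := attain c.
have h0 : ipV c x = 0 by rewrite h gc0.
have h1 : ipW (lam c) (lam x) = 0 by rewrite e; exact: gc0.
have [c0|x0] := Hz h0 h1; first by move: cnz; rewrite c0 eqxx.
have := A1 u; rewrite -e x0 A1 /ipnorm (ip0l HV) sqrtr0 => /esym/eqP.
rewrite sqrtr_eq0 => hle.
by have := ip_gt0 HV unz; rewrite ltNge hle.
Qed.

Let gpos c : c != 0 -> 0 < g c.
Proof.
move=> cnz; have := gneq0 cnz; rewrite neq_lt => /orP [gc|]; last by [].
exfalso.
have [w wc] : exists w, w \notin <[c]>%VS.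
  apply: NNPP => hn.
  have sub : (fullv <= <[c]>)%VS.
    apply/subvP => w _; apply: NNPP => hw; apply: hn; exists w; exact/negP.
  have := dimvS sub; rewrite dim_vline cnz => h1.
  by have := leq_trans Hdim h1.
have wnz : w != 0 by apply: contraNneq wc => ->; rewrite mem0v.
have [d [dc dpos]] : exists d, d \notin <[c]>%VS /\ 0 < g d.
  have := gneq0 wnz; have nwnz : - w != 0 by rewrite oppr_eq0.
  have := gneq0 nwnz; have := gD w (- w); rewrite subrr g0.
  rewrite !neq_lt => hs /orP [h1|h1] /orP [h2|h2].
  - exfalso; lra.
  - by exists w.
  - by exists (- w); rewrite memvN.
  - by exists w.
pose e := d - c.
pose h t := g (c + t *: e).
have K0 : 0 <= `|g e| + `|g (- e)| by apply: addr_ge0.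
apply: (@ivt_lip R h (`|g e| + `|g (- e)|) K0).
- by rewrite /h scale0r addr0.
- by rewrite /h scale1r /e addrC subrK.
- move=> t t0 t1; rewrite /h; apply: gneq0; apply/eqP => e0.
  have [tz|tnz] := eqVneq t 0.
    by move: e0; rewrite tz scale0r addr0 => /eqP; rewrite (negbTE cnz).
  move: dc; rewrite /e in e0.
  have -> : d = (- (1 - t) / t) *: c.
    apply: (scalerI tnz); rewrite scalerA mulrCA mulfV // mulr1 scaleNr.
    by apply/eqP; rewrite -addr_eq0 scalerBl scale1r -e0 scalerBr addrCA eqxx.
  by move/negP; apply; apply: memvZ; apply: memv_line.
- move=> s t st.
  have e1 : c + t *: e = (c + s *: e) + (t - s) *: e.
    by rewrite scalerBl addrACA subrr addr0.
  have e2 : c + s *: e = (c + t *: e) + (t - s) *: (- e).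
    by rewrite scalerN scalerBl opprB addrACA subrr addr0.
  have ts0 : 0 <= t - s by rewrite subr_ge0.
  split.
  + rewrite /h e1; apply: (le_trans (gD _ _)); rewrite gZ //.
    by rewrite lerD2l ler_wpM2l //; apply: (le_trans (ler_norm _)); rewrite lerDl.
  + rewrite /h {1}e2; apply: (le_trans (gD _ _)); rewrite gZ //.
    rewrite lerD2l ler_wpM2l //.
    by apply: (le_trans (ler_norm _)); rewrite ler_wpDl.
Qed.

Lemma cone_full x : cone_hull (lam_orbit lam u) x.
Proof.
have Cc := cone_hull_cone (S := lam_orbit lam u) (u := u) erefl.
apply: (@Lind _ _ _ HV (\dim (fullv : {vspace V})) [::] _ (cone_hull (lam_orbit lam u)) Cc).
- by rewrite span_nil dimv0.
- by move=> y _ w.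
- move=> c _ cnz; have [y [e h]] := attain c.
  exists y; split; last by rewrite (ipC HV) h; apply: gpos.
  exists 1%N, (fun _ => 1), (fun _ => y); split => //.
  by rewrite big_ord1 scale1r.
- by move=> w.
Qed.
End FT.

Unset Implicit Arguments.

Theorem proposition6p9 (R : realType) (V : vectType R) (W : lmodType R)
    (ipV : V -> V -> R) (ipW : W -> W -> R) (lam : V -> W) :
  FTvN_system ipV ipW lam ->
  (2 <= \dim (fullv : {vspace V}))%N ->
  (forall x y : V, ipV x y = 0 -> ipW (lam x) (lam y) = 0 -> x = 0 \/ y = 0) ->
  (forall K : V -> Prop, spectral_cone lam K ->
     (forall x, K x <-> x = 0) \/ (forall x, K x)) /\
  (forall u : V, u != 0 -> forall x, cone_hull (lam_orbit lam u) x).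
Proof.
move=> HF Hdim Hz; split; last by move=> u unz x; exact: (cone_full HF Hdim Hz unz).
move=> K [Kspec [[x0 Kx0] KD KZ]].
have K0 : K 0 by rewrite -(scale0r x0); apply: KZ.
case: (classic (exists x, K x /\ x != 0)) => [[x [Kx xnz]]|hn].
- right => y; have [n [a [v [ap Sv ->]]]] := cone_full HF Hdim Hz xnz y.
  apply: big_ind => // i _; apply: KZ => //; exact: Kspec Kx _ (Sv i).
- left => y; split; last by move=> ->.
  move=> Ky; apply: NNPP => ynz; apply: hn; exists y; split => //; exact/eqP.
Qed.
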